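(* Let $P$ be a poset and let $2\leq\alpha,\beta<\omega$. Then $P$ is $(\alpha,\beta)$-representable if and only if $P\models\psi_{(\alpha-1)(\beta-1)n}$ for all $n\in\omega$.
   Context: A poset $P$ is $(\alpha,\beta)$-representable if there is a set $X$ and an order embedding $h:P\to\wp(X)$ ($\wp(X)$ ordered by inclusion) such that whenever $S\subseteq P$ with $|S|<\alpha$ and $\bigwedge S$ exists in $P$ then $h(\bigwedge S)=\bigcap h[S]$ (with $\bigcap\emptyset=X$), and whenever $T\subseteq P$ with $|T|<\beta$ and $\bigvee T$ exists in $P$ then $h(\bigvee T)=\bigcup h[T]$. The sentences: signature with one binary relation $\leq$; $\vec{x}_k=(x_1,\ldots,x_k)$. For $1\leq k<\omega$: $J_k(\vec{x}_k,y)$ holds under assignment $v$ iff $v(y)$ is the join of $\{v(x_1),\ldots,v(x_k)\}$, $M_k(\vec{x}_k,y)$ iff $v(y)$ is their meet; $C_k(\vec{x}_k,y)=\bigvee_{i=1}^k(y=x_i)$, $D_k=\neg C_k$; $C_{km}(\vec{x}_k,\vec{y}_m)$ holds iff $\{v(y_j)\}\subseteq\{v(x_i)\}$. Let $\sigma_k(\vec{x}_k,c)=\exists z(C_k(\vec{x}_k,z)\wedge z\leq c)$, $\tau_{kr}(\vec{x}_k,\vec{a}_r,c)=C_{kr}(\vec{x}_k,\vec{a}_r)\wedge M_r(\vec{a}_r,c)$, $\rho_{ks}(\vec{x}_k,\vec{b}_s)=\exists z(C_k(\vec{x}_k,z)\wedge J_s(\vec{b}_s,z))$. Define $\phi_{krs0}(\vec{x}_k,y)=D_k(\vec{x}_k,y)$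 and $\phi_{krs(n+1)}(\vec{x}_k,y)=\forall\vec{a}_r\forall\vec{b}_s\forall c\Big(\big(\sigma_k(\vec{x}_k,c)\to\phi_{(k+1)rsn}(\vec{x}_k,c,y)\big)\wedge\big(\tau_{kr}(\vec{x}_k,\vec{a}_r,c)\to\phi_{(k+1)rsn}(\vec{x}_k,c,y)\big)\wedge\big(\rho_{ks}(\vec{x}_k,\vec{b}_s)\to\bigvee_{i=1}^s\phi_{(k+1)rsn}(\vec{x}_k,b_i,y)\big)\Big)$, and $\psi_{rsn}=\forall x\forall y(\neg(x\leq y)\to\phi_{1rsn}(x,y))$ for $1\leq r,s<\omega$, $n\in\omega$. *)

(* Defs.v *)
From mathcomp Require Import all_boot all_order.
Set Implicit Arguments. Unset Strict Implicit. Unset Printing Implicit Defensive.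
Import Order.Theory.
Local Open Scope order_scope.

Section Defs.
Context {d : Order.disp_t} {P : porderType d}.

Definition is_meet (S : P -> Prop) (m : P) : Prop :=
  (forall s, S s -> m <= s) /\ (forall w, (forall s, S s -> w <= s) -> w <= m).

Definition is_join (S : P -> Prop) (m : P) : Prop :=
  (forall s, S s -> s <= m) /\ (forall w, (forall s, S s -> s <= w) -> m <= w).

Definition card_lt (S : P -> Prop) (n : nat) : Prop :=
  exists l : seq P, (size l < n)%N /\ forall x, S x <-> x \in l.

Definition representable (alpha beta : nat) : Prop :=
  exists (X : Type) (h : P -> X -> Prop),
    (forall p q : P, p <= q <-> (forall x, h p x -> h q x)) /\
    (forall (S : P -> Prop) (m : P), card_lt S alpha -> is_meet S m ->
       forall x, h m x <-> (forall s, S s -> h s x)) /\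
    (forall (T : P -> Prop) (m : P), card_lt T beta -> is_join T m ->
       forall x, h m x <-> (exists t, T t /\ h t x)).

(* Semantics of phi_{k r s n}(x_1..x_k, y): xs is the list (x_1,...,x_k),
   so k = size xs; the extended tuple (x_1..x_k, c) is rcons xs c. *)
Fixpoint phi (r s n : nat) (xs : seq P) (y : P) : Prop :=
  match n with
  | 0 => y \notin xs
  | n'.+1 =>
      forall (a : 'I_r -> P) (b : 'I_s -> P) (c : P),
        ((exists z, z \in xs /\ z <= c) -> phi r s n' (rcons xs c) y) /\
        (((forall j, a j \in xs) /\ is_meet (fun w => exists j, w = a j) c) ->
            phi r s n' (rcons xs c) y) /\
        ((exists z, z \in xs /\ is_join (fun w => exists j, w = b j) z) ->
            exists i : 'I_s, phi r s n' (rcons xs (b i)) y)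
  end.

Definition psi (r s n : nat) : Prop :=
  forall x y : P, ~ (x <= y) -> phi r s n [:: x] y.

End Defs.

(* Main.v *)
Require Import Defs.
From mathcomp Require Import all_boot all_order.
From mathcomp Require classical_sets.
From Stdlib Require Import Classical.
From mathcomp Require Import zify.
Set Implicit Arguments. Unset Strict Implicit. Unset Printing Implicit Defensive.
Import Order.Theory.
Local Open Scope order_scope.

Section Work.
Context {d : Order.disp_t} {P : porderType d}.
Variables (r s : nat).

Lemma sub_rcons (xs ys : seq P) c : {subset xs <= ys} -> {subset rcons xs c <= rcons ys c}.
Proof.
move=> sub w; rewrite !mem_rcons !inE => /orP[->//|/sub->]; by rewrite orbT.
Qed.

Lemma phi_anti n : forall (xs ys : seq P) (y : P), {subset xs <= ys} ->
  phi r s n ys y -> phi r s n xs y.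
Proof.
elim: n => [|n IH] xs ys y sub /=.
- by apply: contra => /sub.
- move=> H a b c; have [H1 [H2 H3]] := H a b c; split; [|split].
  + move=> [z [zx zc]]; apply: IH (H1 _); first exact: sub_rcons.
    by exists z; split=> //; apply: sub.
  + move=> [Ha Hm]; apply: IH (H2 _); first exact: sub_rcons.
    by split=> // j; apply: sub.
  + move=> [z [zx zj]]; have [i Hi] := H3 (ex_intro _ z (conj (sub _ zx) zj)).
    by exists i; apply: IH Hi; exact: sub_rcons.
Qed.

Lemma phi_mono n : forall (xs : seq P) y, (exists z, z \in xs) ->
  phi r s n.+1 xs y -> phi r s n xs y.
Proof.
elim: n => [|n IH] xs y [z zx] /=.
- move=> /(_ (fun _ => z) (fun _ => z) z) [H1 _].
  have := H1 (ex_intro _ z (conj zx (lexx z))).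
  by rewrite mem_rcons inE negb_or => /andP[_ ->].
- move=> H a b c; have [H1 [H2 H3]] := H a b c; split; [|split].
  + move=> hz; apply: IH (H1 hz); exists c; by rewrite mem_rcons mem_head.
  + move=> hz; apply: IH (H2 hz); exists c; by rewrite mem_rcons mem_head.
  + move=> hz; have [i Hi] := H3 hz; exists i; apply: IH Hi; exists (b i).
    by rewrite mem_rcons mem_head.
Qed.

Lemma phi_le m n (xs : seq P) y : (n <= m)%N -> (exists z, z \in xs) ->
  phi r s m xs y -> phi r s n xs y.
Proof.
elim: m => [|m IH]; first by rewrite leqn0 => /eqP->.
rewrite leq_eqVlt => /orP[/eqP->//|lt] ne H.
by apply: IH => //; apply: phi_mono.
Qed.

Definition good (xs : seq P) y := forall n, phi r s n xs y.

Lemma good_anti (xs ys : seq P) y : {subset xs <= ys} -> good ys y -> good xs y.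
Proof. by move=> sub H n; apply: phi_anti (H n). Qed.

Lemma good_sigma (xs : seq P) y c : good xs y -> (exists z, z \in xs /\ z <= c) ->
  good (rcons xs c) y.
Proof. by move=> H hz n; exact: ((H n.+1 (fun _ => c) (fun _ => c) c).1 hz). Qed.

Lemma good_tau (xs : seq P) y (a : 'I_r -> P) c : good xs y -> (forall j, a j \in xs) ->
  is_meet (fun w => exists j, w = a j) c -> good (rcons xs c) y.
Proof. by move=> H ha hm n; exact: ((H n.+1 a (fun _ => c) c).2.1 (conj ha hm)). Qed.

Lemma good_rho (xs : seq P) y (b : 'I_s -> P) z : good xs y -> z \in xs ->
  is_join (fun w => exists j, w = b j) z -> exists i, good (rcons xs (b i)) y.
Proof.
move=> H zx hj; apply: NNPP => Hn.
have Hbad : forall i, exists n, ~ phi r s n (rcons xs (b i)) y.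
  move=> i; apply: not_all_ex_not => Hg; apply: Hn; by exists i.
have : forall l : seq 'I_s, exists N, forall i, i \in l -> ~ phi r s N (rcons xs (b i)) y.
  elim=> [|i l [N HN]]; first by exists 0%N.
  have [n Hi] := Hbad i; exists (maxn N n) => j; rewrite inE => /orP[/eqP->|jl] Hp.
  - apply: Hi; apply: phi_le Hp; first by rewrite leq_maxr.
    by exists (b i); rewrite mem_rcons mem_head.
  - apply: (HN j jl); apply: phi_le Hp; first by rewrite leq_maxl.
    by exists (b j); rewrite mem_rcons mem_head.
move=> /(_ (enum 'I_s)) [N HN].
have [i Hi] := (H N.+1 (fun _ => z) b z).2.2 (ex_intro _ z (conj zx hj)).
by apply: (HN i) => //; rewrite mem_enum.
Qed.


Section Max.
Variables (x y : P).
Hypothesis hgood : good [:: x] y.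

Definition consistent (B : P -> Prop) :=
  forall l : seq P, (forall z, z \in l -> B z) -> good (x :: l) y.

Lemma exists_max : exists A, consistent A /\
  forall B, classical_sets.proper A B -> ~ consistent B.
Proof.
apply: (@classical_sets.Zorn_bigcup P consistent) => F FP Ftot l hl.
have : l = [::] \/ exists2 X, F X & forall z, z \in l -> X z.
  elim: l hl => [|w l IH] hl; first by left.
  have [X0 FX0 X0w] : exists2 X, F X & X w by apply: hl; rewrite mem_head.
  right; case: IH => [z zl|->|[X1 FX1 HX1]].
  - by apply: hl; rewrite inE zl orbT.
  - by exists X0 => // z; rewrite inE => /eqP->.
  - case: (Ftot _ _ FX0 FX1) => sub.
    + exists X1 => // z; rewrite inE => /orP[/eqP->|/HX1//]; exact: sub.
    + exists X0 => // z; rewrite inE => /orP[/eqP->//|/HX1]; exact: sub.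
case=> [->|[X FX HX]]; first exact: hgood.
exact: (FP _ FX).
Qed.

Variables (A : P -> Prop).
Hypotheses (consA : consistent A) (maxA : forall B, classical_sets.proper A B -> ~ consistent B).

Lemma addA c : (forall l, (forall z, z \in l -> A z) -> good (x :: c :: l) y) -> A c.
Proof.
move=> H; apply: NNPP => nAc.
apply: (maxA (B := fun w => A w \/ w = c)).
  split; first by move=> w Aw; left.
  by move=> /(_ c (or_intror erefl)).
move=> l hl.
have : good (x :: c :: [seq w <- l | w != c]) y.
  apply: H => z; rewrite mem_filter => /andP[zc zl].
  by case: (hl z zl) => // zc'; rewrite zc' eqxx in zc.
apply: good_anti => w; rewrite !inE => /orP[->//|wl].
case: (boolP (w == c)) => [/eqP->|wc]; first by rewrite orbT.
by rewrite mem_filter wc wl !orbT.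
Qed.

Lemma A_x : A x.
Proof.
apply: addA => l hl; apply: good_anti (consA hl) => w.
by rewrite !inE orbA orbb.
Qed.

Lemma A_y : ~ A y.
Proof.
move=> Ay; have H : good (x :: [:: y]) y.
  by apply: consA => z; rewrite inE => /eqP->.
by have := H 0%N; rewrite /= !inE eqxx orbT.
Qed.

Lemma A_up p q : A p -> p <= q -> A q.
Proof.
move=> Ap pq; apply: addA => l hl.
have g : good (x :: p :: l) y.
  by apply: consA => z; rewrite inE => /orP[/eqP->|/hl].
have := good_sigma g (ex_intro _ p (conj _ pq)).
rewrite !inE eqxx orbT => /(_ isT); apply: good_anti => w.
by rewrite mem_rcons !inE => /orP[->|/orP[->|->]]; rewrite ?orbT.
Qed.

Lemma A_meet (a : 'I_r -> P) c : (forall j, A (a j)) ->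
  is_meet (fun w => exists j, w = a j) c -> A c.
Proof.
move=> Aa hm; apply: addA => l hl.
have g : good (x :: ([seq a j | j <- enum 'I_r] ++ l)) y.
  apply: consA => z; rewrite mem_cat => /orP[/mapP[j _ ->]//|/hl//].
have ha : forall j, a j \in x :: ([seq a j | j <- enum 'I_r] ++ l).
  move=> j; rewrite inE mem_cat; apply/orP; right; apply/orP; left.
  by apply/mapP; exists j; rewrite ?mem_enum.
apply: good_anti (good_tau g ha hm).
move=> w; rewrite mem_rcons !inE mem_cat => /orP[->|/orP[->|->]]; by rewrite ?orbT.
Qed.

Lemma A_join (b : 'I_s -> P) z : A z ->
  is_join (fun w => exists j, w = b j) z -> exists i, A (b i).
Proof.
move=> Az hj; apply: NNPP => Hn.
have Hbad : forall i, exists l, (forall w, w \in l -> A w) /\ ~ good (x :: b i :: l) y.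
  move=> i; apply: NNPP => Hl; apply: Hn; exists i; apply: addA => l hl.
  by apply: NNPP => ng; apply: Hl; exists l.
have : forall idx : seq 'I_s, exists L, (forall w, w \in L -> A w) /\
   forall i, i \in idx -> ~ good (x :: b i :: L) y.
  elim=> [|i idx [L [HL HN]]]; first by exists [::].
  have [l [hl ng]] := Hbad i; exists (l ++ L); split.
    by move=> w; rewrite mem_cat => /orP[/hl|/HL].
  move=> j; rewrite inE => /orP[/eqP->|ji] g.
  - apply: ng; apply: good_anti g => w; rewrite !inE mem_cat => /orP[->|/orP[->|->]];
    by rewrite ?orbT.
  - apply: (HN j ji); apply: good_anti g => w; rewrite !inE mem_cat => /orP[->|/orP[->|->]];
    by rewrite ?orbT.
move=> /(_ (enum 'I_s)) [L [HL HN]].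
have g : good (x :: z :: L) y.
  by apply: consA => w; rewrite inE => /orP[/eqP->|/HL].
have zin : z \in x :: z :: L by rewrite !inE eqxx orbT.
have [i gi] := good_rho g zin hj.
apply: (HN i); first by rewrite mem_enum.
apply: good_anti gi => w; rewrite mem_rcons !inE => /orP[->|/orP[->|->]]; by rewrite ?orbT.
Qed.

End Max.

Definition pfilter (F : P -> Prop) :=
  [/\ (exists z, F z), (exists w, ~ F w), (forall p q, F p -> p <= q -> F q),
      (forall (a : 'I_r -> P) c, (forall j, F (a j)) -> is_meet (fun w => exists j, w = a j) c -> F c)
    & (forall (b : 'I_s -> P) z, F z -> is_join (fun w => exists j, w = b j) z -> exists i, F (b i))].

Lemma exists_pfilter x y : good [:: x] y -> exists F, [/\ pfilter F, F x & ~ F y].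
Proof.
move=> hg; have [A [consA maxA]] := exists_max hg.
exists A; split; first split.
- by exists x; exact: (A_x consA maxA).
- by exists y; exact: (A_y consA).
- exact: (A_up consA maxA).
- exact: (A_meet consA maxA).
- exact: (A_join consA maxA).
- exact: (A_x consA maxA).
- exact: (A_y consA).
Qed.



Lemma range_nth (l : seq P) z0 k : (size l <= k)%N -> z0 \in l ->
  forall w, (exists j : 'I_k, w = nth z0 l j) <-> w \in l.
Proof.
move=> hk z0l w; split.
- move=> [j ->]; case: (ltnP j (size l)) => h; first exact: mem_nth.
  by rewrite nth_default.
- move=> wl; have hi : (index w l < k)%N by apply: leq_trans hk; rewrite index_mem.
  by exists (Ordinal hi); rewrite /= nth_index.
Qed.

Lemma is_meet_ext (S S' : P -> Prop) m : (forall w, S w <-> S' w) -> is_meet S m -> is_meet S' m.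
Proof.
move=> e [h1 h2]; split; first by move=> w /e; apply: h1.
by move=> w hw; apply: h2 => t /e; apply: hw.
Qed.

Lemma is_join_ext (S S' : P -> Prop) m : (forall w, S w <-> S' w) -> is_join S m -> is_join S' m.
Proof.
move=> e [h1 h2]; split; first by move=> w /e; apply: h1.
by move=> w hw; apply: h2 => t /e; apply: hw.
Qed.

End Work.

Theorem theorem5p5 (d : Order.disp_t) (P : porderType d) (alpha beta : nat) :
  (2 <= alpha)%N -> (2 <= beta)%N ->
  (@representable d P alpha beta <->
   forall n : nat, @psi d P (alpha - 1) (beta - 1) n).
Proof.
move=> ha hb; set r := (alpha - 1)%N; set s := (beta - 1)%N; split.
- move=> [X [h [hemb [hmeet hjoin]]]] n x y nxy.
  have [pt [hx hy]] : exists pt, h x pt /\ ~ h y pt.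
    apply: NNPP => H; apply: nxy; apply/hemb => pt hx; apply: NNPP => hy.
    by apply: H; exists pt.
  have up : forall p q, p <= q -> h p pt -> h q pt by move=> p q /hemb; apply.
  suff : forall xs, (forall z, z \in xs -> h z pt) -> phi r s n xs y.
    by apply => z; rewrite inE => /eqP->.
  elim: n => [|n IH] xs hxs /=.
  + by apply/negP => /hxs.
  + move=> a b c; split; [|split].
    * move=> [z [zx zc]]; apply: IH => w; rewrite mem_rcons inE => /orP[/eqP->|/hxs//].
      exact: up zc (hxs _ zx).
    * move=> [Ha Hm]; apply: IH => w; rewrite mem_rcons inE => /orP[/eqP->|/hxs//].
      have CL : card_lt (fun w => exists j, w = a j) alpha.
        exists [seq a j | j <- enum 'I_r]; rewrite size_map size_enum_ord; split.
          rewrite /r; lia.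
        move=> w0; split; first by move=> [j ->]; apply/mapP; exists j; rewrite ?mem_enum.
        by move=> /mapP[j _ ->]; exists j.
      apply/(hmeet _ _ CL Hm) => t [j ->]; exact: hxs.
    * move=> [z [zx zj]].
      have [t [[i ->] hbt]] : exists t, (exists j, t = b j) /\ h t pt.
        have CL : card_lt (fun w => exists j, w = b j) beta.
          exists [seq b j | j <- enum 'I_s]; rewrite size_map size_enum_ord; split.
            rewrite /s; lia.
          move=> w0; split; first by move=> [j ->]; apply/mapP; exists j; rewrite ?mem_enum.
          by move=> /mapP[j _ ->]; exists j.
        apply/(hjoin _ _ CL zj); exact: hxs.
      exists i; apply: IH => w; rewrite mem_rcons inE => /orP[/eqP->//|/hxs//].
- move=> hpsi.
  exists {F : P -> Prop | pfilter r s F}, (fun p F => sval F p); split; [|split].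
  + move=> p q; split.
      by move=> pq [F [_ _ Fup _ _]] /= Fp; exact: Fup _ _ Fp pq.
    move=> H; apply: NNPP => npq.
    have [F [pF Fp nFq]] := exists_pfilter (fun n => hpsi n p q npq).
    by apply: nFq; exact: (H (exist _ F pF) Fp).
  + move=> S m [l [hl Sl]] hm [F [[z Fz] [w nFw] Fup Fmeet Fjoin]] /=; split.
      by move=> Fm t St; apply: Fup Fm _; exact: hm.1 _ St.
    case: l hl Sl => [|z0 l'] hl Sl HS.
      by apply: Fup Fz _; apply: hm.2 => t /Sl.
    have e := @range_nth _ _ (z0 :: l') z0 r ltac:(rewrite /r; lia) (mem_head _ _).
    apply: (Fmeet (fun j => nth z0 (z0 :: l') j)).
      move=> j; apply: HS; apply/Sl/e; by exists j.
    by apply: is_meet_ext hm => t; rewrite e Sl.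
  + move=> T m [l [hl Tl]] hj [F [[z Fz] [w nFw] Fup Fmeet Fjoin]] /=; split.
    * move=> Fm; case: l hl Tl => [|z0 l'] hl Tl.
        by exfalso; apply: nFw; apply: Fup Fm _; apply: hj.2 => t /Tl.
      have e := @range_nth _ _ (z0 :: l') z0 s ltac:(rewrite /s; lia) (mem_head _ _).
      have [i Fi] := Fjoin (fun j => nth z0 (z0 :: l') j) m Fm
        (is_join_ext (fun t => iff_trans (Tl t) (iff_sym (e t))) hj).
      exists (nth z0 (z0 :: l') i); split => //; apply/Tl/e; by exists i.
    * by move=> [t [Tt Ft]]; apply: Fup Ft _; exact: hj.1 _ Tt.
Qed.
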